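(* Let $c_1>0$, $c_2>0$ and $k\in\mathbb{R}\setminus\{0\}$, and consider the system on $\mathbb{R}^3$ $$\dot z_1=\frac1{c_2}z_2z_3,\qquad \dot z_2=-\frac1{c_1}z_1z_3,\qquad \dot z_3=-\frac{k}{c_1}z_1 ,$$ whose equilibrium states are $\widetilde e_0=(0,0,0)$, $\widetilde e_2^m=(0,m,0)$ and $\widetilde e_3^m=(0,0,m)$ for $m\in\mathbb{R}\setminus\{0\}$. Then: (i) $\widetilde e_0$ and $\widetilde e_3^m$ ($m\neq0$) are nonlinear stable; (ii) $\widetilde e_2^m$ ($m\neq0$) is nonlinear stable if $km>0$ and unstable if $km<0$.
   Context: Nonlinear stable means stable in the sense of Lyapunov: for every neighbourhood $U$ of the equilibrium there is a neighbourhood $V$ such that every trajectory starting in $V$ remains in $U$ for all $t\ge0$; unstable means not Lyapunov stable. *)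

(* Defs.v *)
From Stdlib Require Import Reals.
From Coquelicot Require Import Coquelicot.
Open Scope R_scope.

Definition state := (R * R * R)%type.

Definition field (c1 c2 k : R) (z : state) : state :=
  match z with
  | (z1, z2, z3) => (z2 * z3 / c2, - (z1 * z3) / c1, - (k / c1) * z1)
  end.

Definition is_trajectory (f : state -> state) (z : R -> state) : Prop :=
  forall t : R, 0 <= t -> is_derive z t (f (z t)).

Definition lyap_stable (f : state -> state) (e : state) : Prop :=
  forall U : state -> Prop, locally e U ->
    exists V : state -> Prop, locally e V /\
      forall z : R -> state, is_trajectory f z -> V (z 0) ->
        forall t : R, 0 <= t -> U (z t).

Definition lyap_unstable (f : state -> state) (e : state) : Prop :=
  ~ lyap_stable f e.

(* Main.v *)
Require Import Defs.
From Stdlib Require Import Reals Lra Psatz.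
From Coquelicot Require Import Coquelicot.
Open Scope R_scope.

Lemma is_derive_pair' {V W : NormedModule R_AbsRing} (f : R -> V) (g : R -> W) x lf lg :
  is_derive f x lf -> is_derive g x lg -> is_derive (fun t => (f t, g t)) x (lf, lg).
Proof.
  intros Hf Hg. unfold is_derive in *.
  apply (filterdiff_comp'_2 f g (fun a b => (a,b)) x _ _ (fun a b => (a,b)) Hf Hg).
  apply filterdiff_ext with (f := fun t => t).
  - intros [a b]; reflexivity.
  - apply filterdiff_ext_lin with (l1 := fun t => t).
    + apply filterdiff_id.
    + intros [a b]; reflexivity.
Qed.

Lemma is_derive_fst' {V W : NormedModule R_AbsRing} (f : R -> V * W) x l :
  is_derive f x l -> is_derive (fun t => fst (f t)) x (fst l).
Proof.
  intros H. unfold is_derive in *.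
  apply (filterdiff_comp f fst _ fst H). apply filterdiff_linear, is_linear_fst.
Qed.
Lemma is_derive_snd' {V W : NormedModule R_AbsRing} (f : R -> V * W) x l :
  is_derive f x l -> is_derive (fun t => snd (f t)) x (snd l).
Proof.
  intros H. unfold is_derive in *.
  apply (filterdiff_comp f snd _ snd H). apply filterdiff_linear, is_linear_snd.
Qed.

Lemma ball3 (a b c p q r e : R) :
  ball ((a,b,c) : state) e (p,q,r) <-> Rabs (p-a) < e /\ Rabs (q-b) < e /\ Rabs (r-c) < e.
Proof.
  unfold ball; simpl. unfold prod_ball, ball; simpl. unfold AbsRing_ball, abs, minus, plus, opp; simpl. unfold prod_ball; simpl. unfold AbsRing_ball, abs, minus, plus, opp; simpl. unfold Rminus. tauto.
Qed.

Lemma is_derive_val (f : R -> R) (x l l' : R) : is_derive f x l -> l = l' -> is_derive f x l'.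
Proof. intros H ->; exact H. Qed.

Lemma is_derive_mul (f g : R -> R) x df dg : is_derive f x df -> is_derive g x dg ->
  is_derive (fun t => f t * g t) x (df * g x + f x * dg).
Proof. intros Hf Hg. apply (is_derive_mult f g x df dg Hf Hg). intros; apply Rmult_comm. Qed.

Lemma is_derive_add (f g : R -> R) x df dg : is_derive f x df -> is_derive g x dg ->
  is_derive (fun t => f t + g t) x (df + dg).
Proof. intros Hf Hg. apply (is_derive_plus f g x df dg Hf Hg). Qed.

Lemma field_eq c1 c2 k (z : state) : field c1 c2 k z =
  (snd (fst z) * snd z / c2, - (fst (fst z) * snd z) / c1, - (k / c1) * fst (fst z)).
Proof. destruct z as [[a b] c]; reflexivity. Qed.

Lemma const_of_deriv0 (g : R -> R) : (forall s, 0 <= s -> is_derive g s 0) ->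
  forall t, 0 <= t -> g t = g 0.
Proof.
  intros Hd t Ht. destruct (Req_dec t 0) as [->|Hn]; [reflexivity|].
  destruct (MVT_gen g 0 t (fun _ => 0)) as [c [_ Hc]].
  - intros x Hx. apply Hd. rewrite Rmin_left in Hx by lra. lra.
  - intros x Hx. rewrite Rmin_left in Hx by lra. apply continuity_pt_filterlim.
    assert (Hc : continuous g x) by (apply (ex_derive_continuous (K:=R_AbsRing) (V:=R_NormedModule)); exists 0; apply Hd; lra).
    exact Hc.
  - lra.
Qed.

Section Traj.
Variables (c1 c2 k : R) (z : R -> state).
Hypothesis Hz : is_trajectory (field c1 c2 k) z.
Let X t := fst (fst (z t)).
Let Y t := snd (fst (z t)).
Let W t := snd (z t).

Lemma dX t : 0 <= t -> is_derive X t (Y t * W t / c2).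
Proof.
  intros Ht. pose proof (Hz t Ht) as H. rewrite field_eq in H.
  apply is_derive_fst' in H. apply is_derive_fst' in H. exact H.
Qed.
Lemma dY t : 0 <= t -> is_derive Y t (- (X t * W t) / c1).
Proof.
  intros Ht. pose proof (Hz t Ht) as H. rewrite field_eq in H.
  apply is_derive_fst' in H. apply is_derive_snd' in H. exact H.
Qed.
Lemma dW t : 0 <= t -> is_derive W t (- (k / c1) * X t).
Proof.
  intros Ht. pose proof (Hz t Ht) as H. rewrite field_eq in H.
  apply is_derive_snd' in H. exact H.
Qed.

Hypothesis hc1 : c1 <> 0.
Hypothesis hc2 : c2 <> 0.

Lemma H1_const t : 0 <= t -> c2 * X t * X t + c1 * Y t * Y t = c2 * X 0 * X 0 + c1 * Y 0 * Y 0.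
Proof.
  apply (const_of_deriv0 (fun t => c2 * X t * X t + c1 * Y t * Y t)).
  intros s Hs. eapply is_derive_val.
  - apply is_derive_add; apply is_derive_mul.
    apply is_derive_scal. apply (dX s Hs). apply (dX s Hs).
    apply is_derive_scal. apply (dY s Hs). apply (dY s Hs).
  - cbv beta. field; auto.
Qed.

Lemma H2_const t : 0 <= t -> 2 * k * Y t - W t * W t = 2 * k * Y 0 - W 0 * W 0.
Proof.
  intros Ht. assert (E := const_of_deriv0 (fun t => 2 * k * Y t + (-1) * (W t * W t))).
  cbv beta in E. assert (E2 : 2 * k * Y t + -1 * (W t * W t) = 2 * k * Y 0 + -1 * (W 0 * W 0)).
  { apply E; auto. intros s Hs. eapply is_derive_val.
  - apply is_derive_add. apply is_derive_scal. apply (dY s Hs).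
    apply is_derive_scal. apply is_derive_mul; apply (dW s Hs).
  - cbv beta. field; auto. }
  lra.
Qed.
End Traj.




Lemma sq_abs_lt x e : 0 < e -> x * x < e * e -> Rabs x < e.
Proof. intros. destruct (Rcase_abs x); [rewrite Rabs_left|rewrite Rabs_right]; nra. Qed.

Lemma abs_bnd x d : Rabs x < d -> -d < x < d.
Proof. intros H. destruct (Rcase_abs x); [rewrite Rabs_left in H|rewrite Rabs_right in H]; lra. Qed.

Lemma abs_sq x d : Rabs x < d -> x * x < d * d.
Proof. intros H; apply abs_bnd in H; nra. Qed.

Lemma coreXY c1 c2 d e1 x0 y0 x y : 0 < c1 -> 0 < c2 -> 0 < d ->
  ((c1+c2)/c1 + (c1+c2)/c2 + 1) * d = e1 ->
  Rabs x0 < d -> Rabs y0 < d ->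
  c2*x*x + c1*y*y = c2*x0*x0 + c1*y0*y0 -> Rabs x < e1 /\ Rabs y < e1.
Proof.
  intros h1 h2 hd hQ hx0 hy0 H.
  apply abs_sq in hx0. apply abs_sq in hy0.
  set (Q := (c1+c2)/c1 + (c1+c2)/c2 + 1) in *.
  assert (q1 : (c1+c2) = c1*((c1+c2)/c1)) by (field; lra).
  assert (q2 : (c1+c2) = c2*((c1+c2)/c2)) by (field; lra).
  assert (p1 : 0 < (c1+c2)/c1) by (apply Rdiv_lt_0_compat; lra).
  assert (p2 : 0 < (c1+c2)/c2) by (apply Rdiv_lt_0_compat; lra).
  assert (hQ1 : 1 <= Q) by (unfold Q; lra).
  assert (he1 : d <= e1) by nra.
  assert (HH : c2*x*x + c1*y*y < (c1+c2)*(d*d)) by nra.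
  split; apply sq_abs_lt; try lra.
  - assert (c2 * (x*x) < c2 * (e1*e1)); [|nra].
    assert (c2*(x*x) < c2*((c1+c2)/c2)*(d*d)) by nra.
    assert (((c1+c2)/c2)*(d*d) <= Q*(d*d)) by (unfold Q; nra).
    assert (Q*(d*d) = e1*d) by (rewrite <- hQ; ring).
    assert (e1 * d <= e1*e1) by nra.
    nra.
  - assert (c1 * (y*y) < c1 * (e1*e1)); [|nra].
    assert (c1*(y*y) < c1*((c1+c2)/c1)*(d*d)) by nra.
    assert (((c1+c2)/c1)*(d*d) <= Q*(d*d)) by (unfold Q; nra).
    assert (Q*(d*d) = e1*d) by (rewrite <- hQ; ring).
    assert (e1 * d <= e1*e1) by nra.
    nra.
Qed.

Lemma Qd_exists c1 c2 e1 : 0 < c1 -> 0 < c2 -> 0 < e1 ->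
  exists d, 0 < d /\ d <= e1 /\ ((c1+c2)/c1 + (c1+c2)/c2 + 1) * d = e1.
Proof.
  intros h1 h2 he.
  assert (p1 : 0 < (c1+c2)/c1) by (apply Rdiv_lt_0_compat; lra).
  assert (p2 : 0 < (c1+c2)/c2) by (apply Rdiv_lt_0_compat; lra).
  set (Q := (c1+c2)/c1 + (c1+c2)/c2 + 1).
  assert (hQ : 1 <= Q) by (unfold Q; lra).
  exists (e1 / Q). split; [apply Rdiv_lt_0_compat; lra|]. split.
  - apply Rmult_le_reg_l with Q; [lra|]. replace (Q * (e1/Q)) with e1 by (field; lra). nra.
  - field; lra.
Qed.

Lemma coreA c1 c2 k e : 0 < c1 -> 0 < c2 -> 0 < e -> e <= 1 ->
  exists d, 0 < d /\ forall x0 y0 w0 x y w, Rabs x0 < d -> Rabs y0 < d -> Rabs w0 < d ->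
   c2*x*x + c1*y*y = c2*x0*x0 + c1*y0*y0 -> 2*k*y - w*w = 2*k*y0 - w0*w0 ->
   Rabs x < e /\ Rabs y < e /\ Rabs w < e.
Proof.
  intros h1 h2 he he1.
  set (K := Rabs k + 1).
  assert (hK : 1 <= K) by (unfold K; pose proof (Rabs_pos k); lra).
  assert (hk : -K < k < K) by (unfold K; destruct (Rcase_abs k); [rewrite Rabs_left|rewrite Rabs_right]; lra).
  set (e1 := e*e/(8*K)).
  assert (E1 : e1 * (8*K) = e*e) by (unfold e1; field; lra).
  assert (pe1 : 0 < e1) by (unfold e1; apply Rdiv_lt_0_compat; nra).
  assert (le1 : e1 <= e/8) by nra.
  destruct (Qd_exists c1 c2 e1 h1 h2 pe1) as [d [hd [hde hQ]]].
  exists d. split; [exact hd|].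
  intros x0 y0 w0 x y w hx0 hy0 hw0 H1 H2.
  destruct (coreXY c1 c2 d e1 x0 y0 x y h1 h2 hd hQ hx0 hy0 H1) as [hx hy].
  split; [lra|]. split; [lra|].
  apply abs_bnd in hy. apply abs_bnd in hy0. apply abs_sq in hw0.
  apply sq_abs_lt; [lra|].
  assert (k*(y-y0) <= 2*K*e1) by nra.
  nra.
Qed.

Lemma coreB c1 c2 k m e : 0 < c1 -> 0 < c2 -> m <> 0 -> 0 < e -> e <= 1 -> e <= Rabs m ->
  exists d, 0 < d /\ forall x0 y0 w0 x y w, Rabs x0 < d -> Rabs y0 < d -> Rabs (w0 - m) < d ->
   c2*x*x + c1*y*y = c2*x0*x0 + c1*y0*y0 -> 2*k*y - w*w = 2*k*y0 - w0*w0 ->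
   Rabs x < e /\ Rabs y < e /\ 0 < m * w0 /\ - (e * Rabs m) < w*w - m*m < e * Rabs m.
Proof.
  intros h1 h2 hm he he1 hem.
  set (K := Rabs k + 1).
  assert (hK : 1 <= K) by (unfold K; pose proof (Rabs_pos k); lra).
  assert (hk : -K < k < K) by (unfold K; destruct (Rcase_abs k); [rewrite Rabs_left|rewrite Rabs_right]; lra).
  set (M := Rabs m).
  assert (hM : 0 < M) by (apply Rabs_pos_lt; exact hm).
  assert (hMm : M*M = m*m) by (unfold M; destruct (Rcase_abs m); [rewrite Rabs_left|rewrite Rabs_right]; lra).
  assert (hMb : -M <= m <= M) by (unfold M; destruct (Rcase_abs m); [rewrite Rabs_left|rewrite Rabs_right]; lra).
  set (e1 := e*M/(2*(2*M+1+4*K))).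
  assert (E1 : e1 * (2*(2*M+1+4*K)) = e*M) by (unfold e1; field; lra).
  assert (pe1 : 0 < e1) by (unfold e1; apply Rdiv_lt_0_compat; nra).
  assert (le1 : e1 <= e/4) by nra.
  destruct (Qd_exists c1 c2 e1 h1 h2 pe1) as [d [hd [hde hQ]]].
  exists d. split; [exact hd|].
  intros x0 y0 w0 x y w hx0 hy0 hw0 H1 H2.
  destruct (coreXY c1 c2 d e1 x0 y0 x y h1 h2 hd hQ hx0 hy0 H1) as [hx hy].
  split; [lra|]. split; [lra|].
  apply abs_bnd in hy. apply abs_bnd in hy0. apply abs_bnd in hw0.
  assert (hem2 : e <= M) by exact hem. assert (hdM : d <= M/4) by lra.
  assert (hmw : 0 < m * w0).
  { destruct (Rcase_abs m) as [hn|hp].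
    - assert (M = -m) by (unfold M; rewrite Rabs_left; lra).
      assert (w0 < 0) by lra. nra.
    - assert (M = m) by (unfold M; rewrite Rabs_right; lra).
      assert (w0 > 0) by lra. nra. }
  split; [exact hmw|].
  assert (A1 : k*(y-y0) <= 2*K*e1) by nra.
  assert (A2 : -(2*K*e1) <= k*(y-y0)) by nra.
  assert (hd1 : d <= 1/4) by lra.
  assert (Ma : m*(w0-m) <= M*d /\ -(M*d) <= m*(w0-m)).
  { destruct (Rcase_abs m) as [hn|hp].
    - assert (M = -m) by (unfold M; rewrite Rabs_left; lra). subst M. split; nra.
    - assert (M = m) by (unfold M; rewrite Rabs_right; lra). rewrite H. split; nra. }
  assert (Ea : w0*w0 - m*m = (w0-m)*(w0-m) + 2*(m*(w0-m))) by ring.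
  assert (Sa : (w0-m)*(w0-m) < d*d) by nra.
  assert (B1 : w0*w0 - m*m <= e1*(2*M+1)) by nra.
  assert (B2 : -(e1*(2*M+1)) <= w0*w0 - m*m) by nra.
  split; nra.
Qed.

Lemma mul_le_of_le_div b d a : 0 < b -> d <= a / b -> b * d <= a.
Proof. intros hb h. apply Rmult_le_compat_l with (r:=b) in h; [|lra].
  replace (b * (a/b)) with a in h by (field; lra). exact h. Qed.

Lemma min4 a b c f : 0 < a -> 0 < b -> 0 < c -> 0 < f ->
  exists d, 0 < d /\ d <= a /\ d <= b /\ d <= c /\ d <= f.
Proof.
  intros. exists (Rmin (Rmin a b) (Rmin c f)).
  repeat split.
  - repeat apply Rmin_pos; auto.
  - eapply Rle_trans; [apply Rmin_l|apply Rmin_l].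
  - eapply Rle_trans; [apply Rmin_l|apply Rmin_r].
  - eapply Rle_trans; [apply Rmin_r|apply Rmin_l].
  - eapply Rle_trans; [apply Rmin_r|apply Rmin_r].
Qed.

Lemma coreC c1 c2 k m e : 0 < c1 -> 0 < c2 -> 0 < k * m -> 0 < e -> e <= 1 ->
  exists d, 0 < d /\ forall x0 y0 w0 x y w, Rabs x0 < d -> Rabs (y0 - m) < d -> Rabs w0 < d ->
   c2*x*x + c1*y*y = c2*x0*x0 + c1*y0*y0 -> 2*k*y - w*w = 2*k*y0 - w0*w0 ->
   Rabs x < e /\ Rabs (y - m) < e /\ Rabs w < e.
Proof.
  intros h1 h2 hkm he he1.
  assert (hk0 : k <> 0) by (intro; subst; lra).
  assert (hm0 : m <> 0) by (intro; subst; lra).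
  set (ka := Rabs k).
  assert (hka : 0 < ka) by (apply Rabs_pos_lt; exact hk0).
  set (K := ka + 1).
  set (M := Rabs m).
  assert (hM : 0 < M) by (apply Rabs_pos_lt; exact hm0).
  assert (hMb : -M <= m <= M) by (unfold M; destruct (Rcase_abs m); [rewrite Rabs_left|rewrite Rabs_right]; lra).
  assert (hkb : -ka <= k <= ka) by (unfold ka; destruct (Rcase_abs k); [rewrite Rabs_left|rewrite Rabs_right]; lra).
  set (A := c2 + c1*(2*M+1)).
  assert (hA : 0 < A) by (unfold A; nra).
  assert (pee : 0 < e*e) by nra.
  assert (pc1M : 0 < c1*M) by nra.
  assert (pK : 0 < K) by (unfold K; lra).
  assert (q1 : 0 < c2*(e*e)/(4*c1*M+1)).
  { apply Rdiv_lt_0_compat. apply Rmult_lt_0_compat; lra. lra. }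
  assert (q2 : 0 < e*e/(8*K)) by (apply Rdiv_lt_0_compat; lra).
  destruct (min4 e (c2*(e*e)/(4*c1*M+1)) (e*e/(8*K)) 1 he q1 q2 Rlt_0_1) as [e1 [pe1 [e1a [e1b [e1c _]]]]].
  apply mul_le_of_le_div in e1b; [|lra].
  apply mul_le_of_le_div in e1c; [|lra].
  assert (pe11 : 0 < e1*e1) by nra.
  assert (q3 : 0 < c1*(e1*e1)/(2*A+1)).
  { apply Rdiv_lt_0_compat. apply Rmult_lt_0_compat; lra. lra. }
  assert (q4 : 0 < ka*e1/(2*K)).
  { apply Rdiv_lt_0_compat. apply Rmult_lt_0_compat; lra. lra. }
  assert (q5 : 0 < c2*(e*e)/(2*(2*A+1))).
  { apply Rdiv_lt_0_compat. apply Rmult_lt_0_compat; lra. lra. }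
  destruct (min4 e1 _ _ _ pe1 q3 q4 q5) as [d0 [pd0 [da [db [dc dd]]]]].
  apply mul_le_of_le_div in db; [|lra].
  apply mul_le_of_le_div in dc; [|lra].
  apply mul_le_of_le_div in dd; [|lra].
  exists d0. split; [exact pd0|].
  intros x0 y0 w0 x y w hx0 hy0 hw0 H1 H2.
  apply abs_bnd in hx0. apply abs_bnd in hy0. apply abs_bnd in hw0.
  set (D := y - m). set (D0 := y0 - m) in *.
  assert (hd1 : d0 <= 1) by lra.
  assert (Hrho : c2*x0*x0 + c1*(y0*y0 - m*m) <= A * d0).
  { assert (x0*x0 <= d0) by nra.
    assert (y0*y0 - m*m = D0*D0 + 2*m*D0) by (unfold D0; ring).
    assert (D0*D0 <= d0) by nra.
    assert (m*D0 <= M*d0) by nra.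
    unfold A. nra. }
  assert (Hstar : c2*x*x + c1*(2*m*D + D*D) = c2*x0*x0 + c1*(y0*y0 - m*m)) by (unfold D; nra).
  assert (Hkd : - (K * d0) <= k * D).
  { assert (k*(y - y0) = (w*w - w0*w0)/2) by nra.
    assert (w0*w0 <= d0*d0) by nra.
    assert (k*D0 >= -(ka*d0)) by nra.
    assert (k*D = k*(y-y0) + k*D0) by (unfold D, D0; ring).
    unfold K. nra. }
  assert (HD : -e1 < D < e1).
  { destruct (Rle_or_lt 0 (m*D)) as [hp|hn].
    - assert (c1*(D*D) <= A*d0) by nra.
      assert (A*d0 < c1*(e1*e1)) by nra.
      assert (D*D < e1*e1) by nra.
      nra.
    - assert (hkD : k*D < 0).
      { assert ((k*D)*(m*D) = (k*m)*(D*D)) by ring.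
        assert (D <> 0) by (intro HD0; rewrite HD0 in hn; lra).
        assert (0 < D*D) by nra. nra. }
      assert (ka * Rabs D <= K * d0).
      { destruct (Rcase_abs D); [rewrite Rabs_left|rewrite Rabs_right]; try lra.
        - assert (hk' : 0 < k) by nra. assert (ka = k) by (unfold ka; rewrite Rabs_right; lra). nra.
        - assert (hk' : k < 0) by nra. assert (ka = -k) by (unfold ka; rewrite Rabs_left; lra). nra. }
      assert (ka * Rabs D <= ka * e1 / 2) by (unfold K in *; nra).
      assert (Rabs D <= e1/2) by nra.
      apply abs_bnd. lra. }
  split; [|split].
  - apply sq_abs_lt; [lra|].
    assert (c2*(x*x) <= A*d0 + 2*c1*M*e1).
    { assert (m*D >= -(M*e1)) by nra. nra. }
    assert (c2*(x*x) < c2*(e*e)) by nra.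
    nra.
  - apply Rabs_def1; lra.
  - apply sq_abs_lt; [lra|].
    assert (w*w = w0*w0 + 2*(k*D - k*D0)) by (unfold D, D0; nra).
    assert (k*D <= ka*e1) by nra.
    assert (-(k*D0) <= ka*d0) by nra.
    assert (w0*w0 <= d0) by nra.
    unfold K in *. nra.
Qed.

Lemma sign_keep (w : R -> R) m : (forall s, 0 <= s -> continuity_pt w s) ->
  (forall s, 0 <= s -> w s <> 0) -> 0 < m * w 0 -> forall t, 0 <= t -> 0 < m * w t.
Proof.
  intros Hc Hn H0 t Ht. destruct (Rlt_or_le 0 (m * w t)) as [h|h]; auto. exfalso.
  assert (hm : m <> 0) by (intro; subst; lra).
  destruct (Req_dec t 0) as [->|ht]; [lra|].
  assert (hne : m * w t <> 0) by (apply Rmult_integral_contrapositive_currified; auto; apply Hn; lra).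
  destruct (Ranalysis5.IVT_interv (fun s => - (m * w s)) 0 t) as [s [Hs Hs0]].
  - intros a Ha. apply (continuity_pt_opp (fun s => m * w s)).
    apply (continuity_pt_mult (fun _ => m) w).
    + apply continuity_pt_const. intros ? ?; reflexivity.
    + apply Hc; lra.
  - lra.
  - lra.
  - lra.
  - apply (Hn s); [lra|]. assert (m * w s = 0) by lra.
    destruct (Rmult_integral _ _ H); [contradiction|assumption].
Qed.

Lemma stable_of c1 c2 k a b c e0 : 0 < e0 ->
 (forall e, 0 < e -> e <= e0 -> exists d, 0 < d /\ forall z, is_trajectory (field c1 c2 k) z ->
   Rabs (fst (fst (z 0)) - a) < d -> Rabs (snd (fst (z 0)) - b) < d -> Rabs (snd (z 0) - c) < d ->
   forall t, 0 <= t -> Rabs (fst (fst (z t)) - a) < e /\ Rabs (snd (fst (z t)) - b) < e /\ Rabs (snd (z t) - c) < e)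
 -> lyap_stable (field c1 c2 k) (a,b,c).
Proof.
  intros he0 H U [eps HU].
  assert (pe : 0 < Rmin eps e0) by (apply Rmin_pos; [apply cond_pos|lra]).
  destruct (H (Rmin eps e0) pe (Rmin_r _ _)) as [d [hd Hd]].
  exists (fun y : state => ball ((a,b,c) : state) d y). split.
  { exists (mkposreal d hd). intros y Hy; exact Hy. }
  intros z Hz Hz0 t Ht. apply HU.
  destruct (z 0) as [[p q] s] eqn:E0.
  apply ball3 in Hz0. destruct Hz0 as [h1 [h2 h3]].
  specialize (Hd z Hz). rewrite E0 in Hd. simpl in Hd.
  specialize (Hd h1 h2 h3 t Ht).
  destruct (z t) as [[p' q'] s'] eqn:Et. simpl in Hd.
  apply ball3. pose proof (Rmin_l eps e0). lra.
Qed.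

Lemma abs_div_le a b : 1 <= b -> Rabs (a / b) <= Rabs a.
Proof.
  intros hb. unfold Rdiv. rewrite Rabs_mult.
  assert (hi : / b <= 1) by (rewrite <- Rinv_1; apply Rinv_le_contravar; lra).
  assert (hp : 0 < / b) by (apply Rinv_0_lt_compat; lra).
  rewrite (Rabs_pos_eq (/ b)) by lra. pose proof (Rabs_pos a). nra.
Qed.

Section Sol.
Variables (c1 c2 k m S r eps : R).
Hypothesis hm : m <> 0.
Hypothesis hS : 0 < S.
Hypothesis hr : 0 < r.
Hypothesis hc1 : 0 < c1.
Hypothesis hc2e : c2 = r * r / c1.
Hypothesis hke : k = - (S*S) / m.

Definition uu t := eps * exp (S / r * t).
Definition Z1 t := - (c1 / k) * (4 * S * (S / r) * uu t * (1 - uu t ^ 2) / (1 + uu t ^ 2) ^ 2).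
Definition Z2 t := m * (uu t ^ 4 - 6 * uu t ^ 2 + 1) / (uu t ^ 2 + 1) ^ 2.
Definition Z3 t := 4 * S * uu t / (uu t ^ 2 + 1).

Lemma dZ3 t : is_derive Z3 t (- (k / c1) * Z1 t).
Proof.
  unfold Z3, Z1, uu. subst k. auto_derive.
  - apply Rgt_not_eq. nra.
  - field. repeat split; try lra. nra.
Qed.
Lemma dZ2 t : is_derive Z2 t (- (Z1 t * Z3 t) / c1).
Proof.
  unfold Z3, Z1, Z2, uu. subst k. auto_derive.
  - apply Rgt_not_eq. nra.
  - field. repeat split; try lra. nra.
Qed.
Lemma dZ1 t : is_derive Z1 t (Z2 t * Z3 t / c2).
Proof.
  unfold Z3, Z1, Z2, uu. subst k c2. auto_derive.
  - repeat split; try lra. nra.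
  - field. repeat split; try lra. nra.
Qed.

Lemma Z_traj : is_trajectory (field c1 c2 k) (fun t => (Z1 t, Z2 t, Z3 t)).
Proof.
  intros t _. simpl. apply is_derive_pair'; [apply is_derive_pair'|].
  apply dZ1. apply dZ2. apply dZ3.
Qed.

Hypothesis heps : 0 < eps < 1.

Lemma uu0 : uu 0 = eps.
Proof. unfold uu. rewrite Rmult_0_r, exp_0. ring. Qed.

Lemma Z3_0 : Rabs (Z3 0 - 0) <= 4 * S * eps.
Proof.
  unfold Z3. rewrite uu0, Rminus_0_r.
  eapply Rle_trans; [apply abs_div_le; nra|].
  rewrite Rabs_pos_eq; nra.
Qed.

Lemma Z1_0 : Rabs (Z1 0 - 0) <= 4 * c1 / r * Rabs m * eps.
Proof.
  assert (E : Z1 0 - 0 = (4 * c1 / r * m) * (eps * (1 - eps ^ 2) / (1 + eps ^ 2) ^ 2)).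
  { unfold Z1. rewrite uu0. subst k. field. repeat split; try lra. nra. }
  rewrite E, Rabs_mult, Rabs_mult.
  rewrite (Rabs_pos_eq (4 * c1 / r)) by (apply Rlt_le, Rdiv_lt_0_compat; lra).
  assert (h : Rabs (eps * (1 - eps ^ 2) / (1 + eps ^ 2) ^ 2) <= eps).
  { eapply Rle_trans; [apply abs_div_le; nra|]. rewrite Rabs_pos_eq; nra. }
  assert (0 < 4 * c1 / r) by (apply Rdiv_lt_0_compat; lra).
  pose proof (Rabs_pos m). apply Rmult_le_compat_l; [nra|exact h].
Qed.

Lemma Z2_0 : Rabs (Z2 0 - m) <= 8 * Rabs m * eps.
Proof.
  assert (E : Z2 0 - m = m * (- (8 * eps ^ 2) / (eps ^ 2 + 1) ^ 2)).
  { unfold Z2. rewrite uu0. field. nra. }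
  rewrite E, Rabs_mult.
  assert (h : Rabs (- (8 * eps ^ 2) / (eps ^ 2 + 1) ^ 2) <= 8 * eps).
  { eapply Rle_trans; [apply abs_div_le; nra|]. rewrite Rabs_Ropp, Rabs_pos_eq; nra. }
  pose proof (Rabs_pos m). nra.
Qed.

Definition t1 := - ln eps * r / S.

Lemma t1_pos : 0 <= t1.
Proof.
  unfold t1. assert (ln eps < 0) by (rewrite <- ln_1; apply ln_increasing; lra).
  apply Rlt_le, Rdiv_lt_0_compat; nra.
Qed.

Lemma Z2_t1 : Z2 t1 = - m.
Proof.
  assert (U1 : uu t1 = 1).
  { unfold uu, t1. replace (S / r * (- ln eps * r / S)) with (- ln eps) by (field; lra).
    rewrite exp_Ropp, exp_ln by lra. field; lra. }
  unfold Z2. rewrite U1. field.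
Qed.
End Sol.

Theorem proposition5p5 (c1 c2 k : R) (hc1 : 0 < c1) (hc2 : 0 < c2) (hk : k <> 0) :
  (lyap_stable (field c1 c2 k) (0, 0, 0)
   /\ (forall m : R, m <> 0 -> lyap_stable (field c1 c2 k) (0, 0, m)))
  /\ (forall m : R, m <> 0 ->
        (0 < k * m -> lyap_stable (field c1 c2 k) (0, m, 0))
        /\ (k * m < 0 -> lyap_unstable (field c1 c2 k) (0, m, 0))).
Proof.
  assert (hc1' : c1 <> 0) by lra. assert (hc2' : c2 <> 0) by lra.
  split; [split|].
  - apply (stable_of c1 c2 k 0 0 0 1 Rlt_0_1). intros e he he1.
    destruct (coreA c1 c2 k e hc1 hc2 he he1) as [d [hd Hd]].
    exists d. split; [exact hd|]. intros z Hz h0x h0y h0w t Ht.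
    pose proof (H1_const c1 c2 k z Hz hc1' hc2' t Ht) as E1.
    pose proof (H2_const c1 c2 k z Hz hc1' t Ht) as E2. cbv beta in E1, E2.
    rewrite !Rminus_0_r in *.
    exact (Hd _ _ _ _ _ _ h0x h0y h0w E1 E2).
  - intros m hm.
    assert (hM : 0 < Rabs m) by (apply Rabs_pos_lt; exact hm).
    apply (stable_of c1 c2 k 0 0 m (Rmin 1 (Rabs m))); [apply Rmin_pos; lra|].
    intros e he he0.
    assert (he1 : e <= 1) by (pose proof (Rmin_l 1 (Rabs m)); lra).
    assert (hem : e <= Rabs m) by (pose proof (Rmin_r 1 (Rabs m)); lra).
    destruct (coreB c1 c2 k m e hc1 hc2 hm he he1 hem) as [d [hd Hd]].
    exists d. split; [exact hd|]. intros z Hz h0x h0y h0w.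
    rewrite !Rminus_0_r in *.
    assert (HB : forall t, 0 <= t ->
      Rabs (fst (fst (z t))) < e /\ Rabs (snd (fst (z t))) < e /\ 0 < m * snd (z 0) /\
      - (e * Rabs m) < snd (z t) * snd (z t) - m * m < e * Rabs m).
    { intros t Ht.
      pose proof (H1_const c1 c2 k z Hz hc1' hc2' t Ht) as E1.
      pose proof (H2_const c1 c2 k z Hz hc1' t Ht) as E2. cbv beta in E1, E2.
      exact (Hd _ _ _ _ _ _ h0x h0y h0w E1 E2). }
    assert (Hsg : forall t, 0 <= t -> 0 < m * snd (z t)).
    { apply (sign_keep (fun t => snd (z t)) m).
      - intros s Hs. apply continuity_pt_filterlim.
        assert (Hc : continuous (fun t => snd (z t)) s).
        { apply (ex_derive_continuous (K:=R_AbsRing) (V:=R_NormedModule)).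
          eexists. apply (dW c1 c2 k z Hz s Hs). }
        exact Hc.
      - intros s Hs Hw. destruct (HB s Hs) as [_ [_ [_ [Hl _]]]].
        rewrite Hw in Hl. assert (e * Rabs m <= Rabs m * Rabs m) by nra.
        assert (Rabs m * Rabs m = m * m) by (rewrite <- Rabs_mult; apply Rabs_pos_eq; nra).
        lra.
      - destruct (HB 0 (Rle_refl 0)) as [_ [_ [h _]]]. exact h. }
    intros t Ht. rewrite !Rminus_0_r. destruct (HB t Ht) as [hx [hy [_ [hl hu]]]].
    split; [exact hx|]. split; [exact hy|].
    pose proof (Hsg t Ht) as hs. set (w := snd (z t)) in *.
    destruct (Rcase_abs m) as [hn|hp].
    + rewrite Rabs_left in * by lra. assert (w < 0) by nra.
      apply Rabs_def1; nra.
    + rewrite Rabs_right in * by lra. assert (w > 0) by nra.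
      apply Rabs_def1; nra.
  - intros m hm. split.
    + intros hkm. apply (stable_of c1 c2 k 0 m 0 1 Rlt_0_1). intros e he he1.
      destruct (coreC c1 c2 k m e hc1 hc2 hkm he he1) as [d [hd Hd]].
      exists d. split; [exact hd|]. intros z Hz h0x h0y h0w t Ht.
      pose proof (H1_const c1 c2 k z Hz hc1' hc2' t Ht) as E1.
      pose proof (H2_const c1 c2 k z Hz hc1' t Ht) as E2. cbv beta in E1, E2.
      rewrite !Rminus_0_r in *.
      exact (Hd _ _ _ _ _ _ h0x h0y h0w E1 E2).
    + intros hkm Hst.
      set (S := sqrt (- (k * m))).
      set (r := sqrt (c1 * c2)).
      assert (hS : 0 < S) by (apply sqrt_lt_R0; lra).
      assert (hr : 0 < r) by (apply sqrt_lt_R0; nra).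
      assert (hSS : S * S = - (k * m)) by (apply sqrt_sqrt; lra).
      assert (hrr : r * r = c1 * c2) by (apply sqrt_sqrt; nra).
      assert (hc2e : c2 = r * r / c1) by (rewrite hrr; field; lra).
      assert (hke : k = - (S * S) / m) by (rewrite hSS; field; exact hm).
      set (M := Rabs m).
      assert (hM : 0 < M) by (apply Rabs_pos_lt; exact hm).
      destruct (Hst (fun p => ball ((0,m,0) : state) M p)) as [V [[dl Hdl] HV]].
      { exists (mkposreal M hM). intros y Hy; exact Hy. }
      set (C := 4 * S + 4 * c1 / r * M + 8 * M + 1).
      assert (hC : 1 <= C).
      { assert (0 < 4 * c1 / r) by (apply Rdiv_lt_0_compat; lra). unfold C. nra. }
      pose proof (cond_pos dl) as hdl.
      set (eps := Rmin (1/2) (dl / (2 * C))).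
      assert (pe : 0 < eps) by (apply Rmin_pos; [lra| apply Rdiv_lt_0_compat; lra]).
      assert (pe1 : eps < 1) by (pose proof (Rmin_l (1/2) (dl / (2*C))); unfold eps; lra).
      assert (pe2 : 2 * C * eps <= dl).
      { apply mul_le_of_le_div; [lra|]. apply Rmin_r. }
      pose proof (Z_traj c1 c2 k m S r eps hm hS hr hc1 hc2e hke) as Hz.
      assert (heps : 0 < eps < 1) by lra.
      specialize (HV _ Hz).
      assert (Hv0 : V (Z1 c1 k S r eps 0, Z2 m S r eps 0, Z3 S r eps 0)).
      { apply Hdl. apply ball3.
        pose proof (Z1_0 c1 k m S r eps hm hS hr hc1 hke heps) as A1.
        pose proof (Z2_0 m S r eps heps) as A2.
        pose proof (Z3_0 S r eps hS heps) as A3.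
        assert (0 < 4 * c1 / r) by (apply Rdiv_lt_0_compat; lra).
        change (Rabs m) with M in A1, A2.
        assert (CE : 2 * C * eps = 2 * (4 * S * eps) + 2 * (4 * c1 / r * M * eps) + 2 * (8 * M * eps) + 2 * eps) by (unfold C; ring).
        assert (0 < S * eps) by nra. assert (0 < M * eps) by nra.
        assert (0 < 4 * c1 / r * M * eps) by (apply Rmult_lt_0_compat; [apply Rmult_lt_0_compat|]; lra).
        repeat split; lra. }
      specialize (HV Hv0 _ (t1_pos S r eps hS hr heps)).
      apply ball3 in HV. destruct HV as [_ [HV _]].
      rewrite (Z2_t1 m S r eps hS hr heps) in HV.
      replace (- m - m) with (-2 * m) in HV by ring.
      rewrite Rabs_mult in HV. change (Rabs m) with M in HV.
      rewrite Rabs_left in HV by lra. lra.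
Qed.
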